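(* Let $a\le n$, $k\in\mathbb Z$, and $u,w\in S_{[a,n]}$ with $u\xrightarrow{k}w$. If $i\in u((k,n])$ and $i\notin\mathrm{fix}_{(k,n]}(u,w)$, then there exists $t\in[a,k]$ with $w(t)\ge i$.
   Context: $S_{[a,n]}$ is the set of bijections of $\mathbb Z$ fixing every integer outside $[a,n]$; $\tau_{i,j}$ is the transposition of $i<j$, $u\tau_{i,j}=u\circ\tau_{i,j}$, $\ell(u)$ is the number of inversions. $u\lessdot_k u\tau_{i,j}$ if $i\le k<j$ and $\ell(u\tau_{i,j})=\ell(u)+1$. $u\xrightarrow{k}w$ means there is a chain $u=v_1\lessdot_k\cdots\lessdot_k v_s=w$ ($s\ge1$), $v_{t+1}=v_t\tau_{i_t,j_t}$, with $v_1(i_1)<\cdots<v_{s-1}(i_{s-1})$. For $I\subseteq\mathbb Z$, $\mathrm{fix}_I(u,w)=\{u(t):t\in I,\ u(t)=w(t)\}$. *)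

(* Defs.v *)
From Stdlib Require Import ZArith List Lia.
Import ListNotations.
Open Scope Z_scope.

Definition bijZ (u : Z -> Z) : Prop :=
  exists v : Z -> Z, (forall x, v (u x) = x) /\ (forall x, u (v x) = x).

Definition fixes_outside (lo hi : Z) (u : Z -> Z) : Prop :=
  forall t, t < lo \/ hi < t -> u t = t.

Definition in_S (a n : Z) (u : Z -> Z) : Prop := bijZ u /\ fixes_outside a n u.

Definition tau (i j : Z) (x : Z) : Z :=
  if Z.eqb x i then j else if Z.eqb x j then i else x.

Definition rmul_tau (u : Z -> Z) (i j : Z) : Z -> Z := fun x => u (tau i j x).

Definition inv_count (lo hi : Z) (u : Z -> Z) : nat :=
  let N := Z.to_nat (hi - lo + 1) in
  length (filter (fun pq : nat * nat =>
            let p := lo + Z.of_nat (fst pq) in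
            let q := lo + Z.of_nat (snd pq) in
            andb (Z.ltb p q) (Z.ltb (u q) (u p)))
          (list_prod (seq 0 N) (seq 0 N))).

(* ell(u) = L: u is a bijection of Z with finite support, and counting the
   inversions in any window [lo,hi] containing the support gives L (this count
   equals the total number of inversions, since u permutes such a window). *)
Definition length_is (u : Z -> Z) (L : nat) : Prop :=
  bijZ u /\ exists lo hi, fixes_outside lo hi u /\ inv_count lo hi u = L.

Definition kcover (k : Z) (u : Z -> Z) (i j : Z) : Prop :=
  i <= k < j /\
  exists L, length_is u L /\ length_is (rmul_tau u i j) (S L).

(* kchain k u w m : there is a chain u = v_1 <._k ... <._k v_s = w with
   v_{t+1} = v_t tau_{i_t,j_t}, m < v_1(i_1) < ... < v_{s-1}(i_{s-1}). *)
Inductive kchain (k : Z) : (Z -> Z) -> (Z -> Z) -> Z -> Prop :=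
| kchain_refl : forall u m, kchain k u u m
| kchain_step : forall u w m i j,
    kcover k u i j -> m < u i ->
    kchain k (rmul_tau u i j) w (u i) -> kchain k u w m.

Definition karrow (k : Z) (u w : Z -> Z) : Prop := exists m, kchain k u w m.

Definition in_fix_oc (lo hi : Z) (u w : Z -> Z) (x : Z) : Prop :=
  exists t, lo < t <= hi /\ u t = w t /\ u t = x.

(* Main.v *)
Require Import Defs.
From Stdlib Require Import ZArith List Lia Bool.
Import ListNotations.
Open Scope Z_scope.

Lemma NoDup_prod {A B} (l : list A) (l' : list B) :
  NoDup l -> NoDup l' -> NoDup (list_prod l l').
Proof.
  intros H H'. induction H as [|a l Ha Hl IH]; simpl; [constructor|].
  apply NoDup_app; auto.
  - apply NoDup_map_NoDup_ForallPairs; auto.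
    intros x y _ _ E. now inversion E.
  - intros [x y] Hx Hy. apply in_map_iff in Hx as [z [Ez _]]. inversion Ez; subst.
    apply in_prod_iff in Hy as [Hy _]. contradiction.
Qed.

Definition Inv (lo hi : Z) (u : Z -> Z) : list (Z * Z) :=
  let N := Z.to_nat (hi - lo + 1) in
  map (fun pq : nat * nat => (lo + Z.of_nat (fst pq), lo + Z.of_nat (snd pq)))
  (filter (fun pq : nat * nat =>
            let p := lo + Z.of_nat (fst pq) in
            let q := lo + Z.of_nat (snd pq) in
            andb (Z.ltb p q) (Z.ltb (u q) (u p)))
          (list_prod (seq 0 N) (seq 0 N))).

Lemma Inv_len lo hi u : length (Inv lo hi u) = inv_count lo hi u.
Proof. unfold Inv, inv_count. now rewrite length_map. Qed.

Lemma Inv_In lo hi u p q :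
  In (p, q) (Inv lo hi u) <-> lo <= p /\ q <= hi /\ p < q /\ u q < u p.
Proof.
  unfold Inv. rewrite in_map_iff. split.
  - intros [[x y] [E H]]. simpl in E. inversion E; subst; clear E.
    apply filter_In in H as [H1 H2]. apply in_prod_iff in H1 as [H1 H3].
    apply in_seq in H1, H3. simpl in H2. apply andb_prop in H2 as [H2 H4].
    apply Z.ltb_lt in H2, H4. lia.
  - intros (H1 & H2 & H3 & H4). exists (Z.to_nat (p - lo), Z.to_nat (q - lo)).
    simpl. split. f_equal; lia.
    apply filter_In. split.
    + apply in_prod_iff. split; apply in_seq; lia.
    + simpl. replace (lo + Z.of_nat (Z.to_nat (p - lo))) with p by lia.
      replace (lo + Z.of_nat (Z.to_nat (q - lo))) with q by lia.
      apply andb_true_intro; split; apply Z.ltb_lt; lia.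
Qed.

Lemma Inv_NoDup lo hi u : NoDup (Inv lo hi u).
Proof.
  unfold Inv. apply NoDup_map_NoDup_ForallPairs.
  - intros [x y] [x' y'] _ _ E. simpl in E. inversion E. f_equal; lia.
  - apply NoDup_filter, NoDup_prod; apply seq_NoDup.
Qed.

Lemma maps_into lo hi u : bijZ u -> fixes_outside lo hi u ->
  forall x, lo <= x <= hi -> lo <= u x <= hi.
Proof.
  intros [v [H1 H2]] F x Hx.
  destruct (Z_le_gt_dec lo (u x)); destruct (Z_le_gt_dec (u x) hi); try lia;
  exfalso; assert (E : u (u x) = u x) by (apply F; lia);
  assert (E2 : v (u (u x)) = v (u x)) by (now rewrite E);
  rewrite !H1 in E2; lia.
Qed.

Lemma Inv_incl lo1 hi1 lo2 hi2 u : bijZ u -> fixes_outside lo1 hi1 u ->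
  fixes_outside lo2 hi2 u -> incl (Inv lo1 hi1 u) (Inv lo2 hi2 u).
Proof.
  intros B F1 F2 [p q] H. apply Inv_In in H. apply Inv_In.
  pose proof (maps_into _ _ _ B F2) as M.
  destruct H as (H1 & H2 & H3 & H4).
  assert (lo2 <= p).
  { destruct (Z_le_gt_dec lo2 p); auto. exfalso.
    rewrite (F2 p) in H4 by lia.
    destruct (Z_le_gt_dec q hi2).
    - destruct (Z_le_gt_dec lo2 q). specialize (M q). lia.
      rewrite (F2 q) in H4 by lia. lia.
    - rewrite (F2 q) in H4 by lia. lia. }
  assert (q <= hi2).
  { destruct (Z_le_gt_dec q hi2); auto. exfalso.
    rewrite (F2 q) in H4 by lia.
    destruct (Z_le_gt_dec lo2 p).
    - destruct (Z_le_gt_dec p hi2). specialize (M p). lia.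
      rewrite (F2 p) in H4 by lia. lia.
    - rewrite (F2 p) in H4 by lia. lia. }
  lia.
Qed.

Lemma inv_window lo1 hi1 lo2 hi2 u : bijZ u -> fixes_outside lo1 hi1 u ->
  fixes_outside lo2 hi2 u -> inv_count lo1 hi1 u = inv_count lo2 hi2 u.
Proof.
  intros. rewrite <- !Inv_len. apply Nat.le_antisymm;
  apply NoDup_incl_length; try apply Inv_NoDup; apply Inv_incl; auto.
Qed.

Definition phi (i j : Z) (pq : Z * Z) : Z * Z :=
  let (p, q) := pq in
  if orb (andb (Z.ltb i p) (Z.ltb p j)) (andb (Z.ltb i q) (Z.ltb q j)) then (p, q)
  else (tau i j p, tau i j q).

Ltac crush :=
  unfold tau in *;
  repeat match goal with
  | |- context [Z.eqb ?a ?b] => destruct (Z.eqb_spec a b)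
  | H : context [Z.eqb ?a ?b] |- _ => destruct (Z.eqb_spec a b)
  | |- context [Z.ltb ?a ?b] => destruct (Z.ltb_spec a b)
  | H : context [Z.ltb ?a ?b] |- _ => destruct (Z.ltb_spec a b)
  end; simpl in *; subst; try lia.

Lemma phi_invol i j pq : i < j -> phi i j (phi i j pq) = pq.
Proof.
  intros Hij. destruct pq as [p q]. unfold phi.
  destruct (orb (andb (Z.ltb i p) (Z.ltb p j)) (andb (Z.ltb i q) (Z.ltb q j))) eqn:E.
  - rewrite E. reflexivity.
  - crush; f_equal; lia.
Qed.

Lemma swap_decreases lo hi u i j :
  lo <= i -> i < j -> j <= hi -> u j < u i ->
  (inv_count lo hi (rmul_tau u i j) < inv_count lo hi u)%nat.
Proof.
  intros H1 H2 H3 H4. rewrite <- !Inv_len.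
  set (l := map (phi i j) (Inv lo hi (rmul_tau u i j))).
  assert (ND : NoDup ((i, j) :: l)).
  { constructor.
    - unfold l. intros Hin. apply in_map_iff in Hin as [x [Ex Hx]].
      assert (x = phi i j (i, j)) by (rewrite <- Ex, phi_invol; auto).
      subst x. unfold phi in Hx. crush.
      apply Inv_In in Hx. lia.
    - unfold l. apply NoDup_map_NoDup_ForallPairs; [|apply Inv_NoDup].
      intros x y _ _ E. rewrite <- (phi_invol i j x), <- (phi_invol i j y); auto.
      now rewrite E. }
  assert (IN : incl ((i, j) :: l) (Inv lo hi u)).
  { intros [p q] [E | Hin].
    - inversion E; subst. apply Inv_In. lia.
    - unfold l in Hin. apply in_map_iff in Hin as [[x y] [Ex Hx]].
      apply Inv_In in Hx. apply Inv_In. unfold rmul_tau in Hx.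
      unfold phi in Ex. destruct Hx as (A1 & A2 & A3 & A4).
      crush; inversion Ex; subst; lia. }
  pose proof (NoDup_incl_length ND IN) as HH. simpl in HH. unfold l in HH. rewrite length_map in HH. lia.
Qed.

Lemma fix_weaken lo hi lo' hi' u : lo' <= lo -> hi <= hi' ->
  fixes_outside lo hi u -> fixes_outside lo' hi' u.
Proof. intros A B F t Ht. apply F. lia. Qed.

Lemma cover_lt k u i j : kcover k u i j -> u i < u j.
Proof.
  intros [Hk [L [[B [lo1 [hi1 [F1 C1]]]] [B' [lo2 [hi2 [F2 C2]]]]]]].
  set (lo := Z.min (Z.min lo1 lo2) i). set (hi := Z.max (Z.max hi1 hi2) j).
  assert (E1 : inv_count lo hi u = L).
  { rewrite <- C1. apply inv_window; auto. eapply fix_weaken; [| |exact F1]; lia. }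
  assert (E2 : inv_count lo hi (rmul_tau u i j) = S L).
  { rewrite <- C2. apply inv_window; auto. eapply fix_weaken; [| |exact F2]; lia. }
  destruct (Z.lt_trichotomy (u i) (u j)) as [H|[H|H]]; auto.
  - exfalso. destruct B as [v [V1 V2]].
    assert (v (u i) = v (u j)) by now rewrite H. rewrite !V1 in H0. lia.
  - exfalso. pose proof (swap_decreases lo hi u i j) as SD.
    rewrite E1, E2 in SD. assert (S L < L)%nat by (apply SD; lia). lia.
Qed.

Lemma chain_mono k v w m : kchain k v w m -> forall q, q <= k -> v q <= w q.
Proof.
  induction 1 as [|u w m i j C Hm Ch IH]; intros q Hq; [lia|].
  pose proof (cover_lt _ _ _ _ C) as Hlt. destruct C as [[Hi Hj] _].
  specialize (IH q Hq). unfold rmul_tau, tau in IH.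
  destruct (Z.eqb_spec q i); subst; [lia|].
  destruct (Z.eqb_spec q j); [lia|]. lia.
Qed.

Lemma chain_move k v w m : kchain k v w m -> forall p, k < p -> v p <> w p ->
  exists q, q <= k /\ w q >= v p.
Proof.
  induction 1 as [|u w m i j C Hm Ch IH]; intros p Hp Hne; [congruence|].
  pose proof (chain_mono _ _ _ _ Ch) as M.
  pose proof C as C'. destruct C' as [[Hi Hj] _].
  destruct (Z.eq_dec p j).
  - subst. exists i. split; [lia|]. specialize (M i Hi).
    unfold rmul_tau, tau in M. rewrite Z.eqb_refl in M. lia.
  - assert (E : rmul_tau u i j p = u p).
    { unfold rmul_tau, tau. destruct (Z.eqb_spec p i); [lia|].
      destruct (Z.eqb_spec p j); [lia|]. reflexivity. }
    destruct (IH p Hp) as [q Hq]; [congruence|]. exists q. lia.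
Qed.

Theorem lemma2p25 (a n k : Z) (u w : Z -> Z) (i : Z) :
  a <= n -> in_S a n u -> in_S a n w -> karrow k u w ->
  (exists t, k < t <= n /\ u t = i) ->
  ~ in_fix_oc k n u w i ->
  exists t, a <= t <= k /\ w t >= i.
Proof.
  intros Han [Bu Fu] [Bw Fw] [m Ch] [p [Hp Ep]] NF.
  assert (Hne : u p <> w p).
  { intros E. apply NF. exists p. auto. }
  destruct (chain_move _ _ _ _ Ch p ltac:(lia) Hne) as [q [Hq Hw]].
  exists q. split; [|lia]. split; [|lia].
  destruct (Z_le_gt_dec a q) as [|Hqa]; auto. exfalso.
  rewrite (Fw q) in Hw by lia.
  destruct (Z_le_gt_dec a p).
  - pose proof (maps_into _ _ _ Bu Fu p ltac:(lia)). lia.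
  - rewrite (Fu p) in Hw by lia. lia.
Qed.
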